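(* Let $B_1\in\mathbf B$ and $B_2\in\mathrm{Mat}_{2,3}(\mathbb R)$ with $B_2\notin B_1\mathbb R$. Then $\mu\{x: p_{B_1,B_2}(x)\ne0\}>0$.
   Context: $\mathbf A=\{A_i\}_{i\in\mathcal I}\subset\mathrm{SL}(3,\mathbb R)_{>0}$ finite (determinant one, positive entries), generating a semigroup Zariski dense in $\mathrm{SL}(3,\mathbb R)$. For a $3\times3$ matrix $A$ with rows $r_{A,j}$, $\tilde x=(x_1,x_2,1)$ and $\varphi_A(x)=(\langle r_{A,1},\tilde x\rangle/\langle r_{A,3},\tilde x\rangle,\langle r_{A,2},\tilde x\rangle/\langle r_{A,3},\tilde x\rangle)$. $p$ positive probability vector, $\mu$ the compactly supported probability on $\mathbb R^2_{>0}$ with $\mu=\sum_ip_i\varphi_{A_i}\mu$. $\mathbf B$: matrices $B\in\mathrm{Mat}_{2,3}(\mathbb R)$ with rows $r_{B,1},r_{B,2}$ such that $|r_{B,2}|=1$, $r_{B,2}$ has nonnegative coordinates and $r_{B,1},r_{B,2}$ are linearly independent. For $B_1,B_2\in\mathrm{Mat}_{2,3}(\mathbb R)$, $p_{B_1,B_2}(x)=\det\begin{pmatrix}\langle r_{B_1,1},\tilde x\rangle&\langle r_{B_2,1},\tilde x\rangle\\\langle r_{B_1,2},\tilde x\rangle&\langle r_{B_2,2},\tilde x\rangle\end{pmatrix}$ for $x\in\mathbb R^2$. *)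

(* Defs.v *)
From HB Require Import structures.
From mathcomp Require Import all_boot all_order all_algebra.
From mathcomp Require Import all_classical all_reals all_analysis.
Set Implicit Arguments. Unset Strict Implicit. Unset Printing Implicit Defensive.
Import Order.TTheory GRing.Theory Num.Theory.
Import numFieldNormedType.Exports.
Local Open Scope ring_scope.
Local Open Scope classical_set_scope.

Definition xtilde (R : realType) (x : R * R) : 'cV[R]_3 :=
  \col_(i < 3) [:: x.1; x.2; 1] `_ i.

Definition rowdot (R : realType) m (A : 'M[R]_(m, 3)) (j : 'I_m) (x : R * R) : R :=
  (A *m xtilde x) j 0.

Definition phiA (R : realType) (A : 'M[R]_3) (x : R * R) : R * R :=
  (rowdot A 0 x / rowdot A 2%:R x, rowdot A 1 x / rowdot A 2%:R x).

Definition pB (R : realType) (B1 B2 : 'M[R]_(2, 3)) (x : R * R) : R :=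
  rowdot B1 0 x * rowdot B2 1 x - rowdot B2 0 x * rowdot B1 1 x.

Definition in_Bset (R : realType) (B : 'M[R]_(2, 3)) : Prop :=
  \sum_(j < 3) (B 1 j) ^+ 2 = 1 /\ (forall j, 0 <= B 1 j) /\ row_free B.

Inductive in_semigroup (R : realType) (I : finType) (A : I -> 'M[R]_3) : 'M[R]_3 -> Prop :=
| sg_gen i : in_semigroup A (A i)
| sg_mul M N : in_semigroup A M -> in_semigroup A N -> in_semigroup A (M *m N).

Inductive polyfun (R : realType) : ('M[R]_3 -> R) -> Prop :=
| pf_const c : polyfun (fun _ => c)
| pf_coord i j : polyfun (fun M => M i j)
| pf_add f g : polyfun f -> polyfun g -> polyfun (fun M => f M + g M)
| pf_mul f g : polyfun f -> polyfun g -> polyfun (fun M => f M * g M).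

Definition zariski_dense_SL3 (R : realType) (S : 'M[R]_3 -> Prop) : Prop :=
  forall f, polyfun f -> (forall M, S M -> f M = 0) ->
  forall M, \det M = 1 -> f M = 0.

(* Main.v *)
Require Import Defs.
From HB Require Import structures.
From mathcomp Require Import all_boot all_order all_algebra.
From mathcomp Require Import all_classical all_reals all_analysis.
From mathcomp Require Import ring lra.
Import Order.TTheory GRing.Theory Num.Theory.
Import numFieldNormedType.Exports.
Local Open Scope ring_scope.
Local Open Scope classical_set_scope.
Set Implicit Arguments. Unset Strict Implicit. Unset Printing Implicit Defensive.

Section Aux.
Variable R : realType.

Lemma rowdot_expand m (M : 'M[R]_(m, 3)) j (x : R * R) :
  rowdot M j x = M j 0 * x.1 + M j 1 * x.2 + M j 2%:R.
Proof.
rewrite /rowdot /xtilde !mxE !big_ord_recr big_ord0 /= !mxE /=.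
rewrite add0r mulr1.
by congr (M j _ * _ + M j _ * _ + M j _); apply: val_inj.
Qed.

Lemma meas_aff (a b c : R) :
  measurable_fun [set: R * R] (fun x : R * R => a * x.1 + b * x.2 + c).
Proof.
apply: measurable_realfun.measurable_funD; last exact: measurable_cst.
apply: measurable_realfun.measurable_funD; apply: measurable_realfun.measurable_funM; try exact: measurable_cst.
exact: measurable_fst. exact: measurable_snd.
Qed.

Lemma meas_rowdot m (M : 'M[R]_(m, 3)) j :
  measurable_fun [set: R * R] (rowdot M j).
Proof.
have -> : rowdot M j = (fun x : R * R => M j 0 * x.1 + M j 1 * x.2 + M j 2%:R).
  by apply/funext => x; rewrite rowdot_expand.
exact: meas_aff.
Qed.

Lemma meas_pB (B B' : 'M[R]_(2, 3)) : measurable_fun [set: R * R] (pB B B').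
Proof.
apply: measurable_realfun.measurable_funB; apply: measurable_realfun.measurable_funM; exact: meas_rowdot.
Qed.

Lemma meas_neq0 (h : R * R -> R) : measurable_fun [set: R * R] h ->
  measurable [set x | h x != 0].
Proof.
move=> mh.
have := mh measurableT (~` [set 0%R]) (measurableC (measurable_set1 _)).
rewrite setTI; congr measurable; apply/seteqP; split => x /=; by move/eqP.
Qed.

Lemma meas_eq0 (h : R * R -> R) : measurable_fun [set: R * R] h ->
  measurable [set x | h x = 0].
Proof.
move=> mh.
have := mh measurableT ([set 0%R]) (measurable_set1 _).
by rewrite setTI.
Qed.


Lemma rowdot_mul m (C : 'M[R]_(m, 3)) (A : 'M[R]_3) j x :
  rowdot (C *m A) j x = C j 0 * rowdot A 0 x + C j 1 * rowdot A 1 x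
                        + C j 2%:R * rowdot A 2%:R x.
Proof.
rewrite /rowdot -mulmxA mxE !big_ord_recr big_ord0 /=.
have e0 : widen_ord (leqnSn 2) (widen_ord (leqnSn 1) ord_max) = 0 :> 'I_3 by apply: val_inj.
have e1 : widen_ord (leqnSn 2) ord_max = 1 :> 'I_3 by apply: val_inj.
have e2 : ord_max = 2%:R :> 'I_3 by apply: val_inj.
rewrite e0 e1 e2; ring.
Qed.

Lemma pB_phi (C C' : 'M[R]_(2, 3)) (A : 'M[R]_3) x :
  rowdot A 2%:R x != 0 ->
  pB C C' (phiA A x) * (rowdot A 2%:R x) ^+ 2 = pB (C *m A) (C' *m A) x.
Proof.
move=> H; rewrite /pB !rowdot_mul /phiA.
set r0 := rowdot A 0 x; set r1 := rowdot A 1 x; set r2 := rowdot A 2%:R x.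
fold r2 in H.
rewrite !rowdot_expand /=.
by field.
Qed.

Lemma pB_phi0 (C C' : 'M[R]_(2, 3)) (A : 'M[R]_3) x :
  rowdot A 2%:R x = 0 -> phiA A x = (0, 0).
Proof. by move=> H; rewrite /phiA H invr0 !mulr0. Qed.

Lemma meas_const (b : bool) : measurable [set _ : R * R | b].
Proof.
case: b.
  by have -> : [set _ : R * R | true] = setT by apply/seteqP; split.
by have -> : [set _ : R * R | false] = set0 by apply/seteqP; split.
Qed.

Lemma meas_preimage (C C' : 'M[R]_(2, 3)) (A : 'M[R]_3) :
  measurable (phiA A @^-1` [set y | pB C C' y != 0]).
Proof.
have -> : phiA A @^-1` [set y | pB C C' y != 0] =
  ([set x | rowdot A 2%:R x != 0] `&` [set x | pB (C *m A) (C' *m A) x != 0])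
  `|` ([set x | rowdot A 2%:R x = 0] `&` [set _ | pB C C' (0, 0) != 0]).
  apply/seteqP; split => x /=.
    have [H|H] := eqVneq (rowdot A 2%:R x) 0.
      by rewrite (pB_phi0 C C' H) => ?; right.
    move=> Hp; left; split => //; rewrite -pB_phi //.
    by rewrite mulf_neq0 // expf_neq0.
  case=> [[H Hp]|[H Hp]]; last by rewrite (pB_phi0 C C' H).
  by move: Hp; rewrite -pB_phi //; apply: contra => /eqP ->; rewrite mul0r.
apply: measurableU; apply: measurableI.
- apply: meas_neq0; exact: meas_rowdot.
- apply: meas_neq0; exact: meas_pB.
- apply: meas_eq0; exact: meas_rowdot.
- exact: meas_const.
Qed.

End Aux.

Section Alg.
Variable R : realFieldType.

Definition q (B1 B2 : 'M[R]_(2, 3)) (v : 'cV[R]_3) :=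
  (B1 *m v) 0 0 * (B2 *m v) 1 0 - (B2 *m v) 0 0 * (B1 *m v) 1 0.

Definition mkM (a b : R) (v : 'cV[R]_3) : 'M[R]_3 :=
  \matrix_(i < 3, j < 3)
    nth 0 (nth [::] [:: [:: (v 2%:R 0)^-1; 0; v 0 0 - a / v 2%:R 0];
                        [:: 0; 1; v 1 0 - b];
                        [:: 0; 0; v 2%:R 0]] i) j.

Lemma mkM_det (a b : R) (v : 'cV[R]_3) : v 2%:R 0 != 0 -> \det (mkM a b v) = 1.
Proof.
move=> H; rewrite -det_tr det_trig; last first.
  apply/is_trig_mxP => i j; rewrite !mxE.
  by case: i => [[|[|[|i]]] Hi] //; case: j => [[|[|[|j]]] Hj].
rewrite !big_ord_recr big_ord0 /= !mxE /=.
by rewrite mul1r mulr1 mulVf.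
Qed.

Lemma mkM_mul (a b : R) (v : 'cV[R]_3) : v 2%:R 0 != 0 ->
  mkM a b v *m \col_(i < 3) [:: a; b; 1] `_ i = v.
Proof.
move=> H; apply/matrixP => i j; rewrite !mxE !big_ord_recr big_ord0 /= !mxE /=.
rewrite ord1.
case: i => [[|[|[|i]]] Hi] //=.
- have -> : Ordinal Hi = 0 by apply: val_inj.
  by field.
- have -> : Ordinal Hi = 1 by apply: val_inj.
  ring.
- have -> : Ordinal Hi = 2%:R by apply: val_inj.
  ring.
Qed.


Lemma q_ext (B1 B2 : 'M[R]_(2, 3)) :
  (forall v : 'cV[R]_3, v 2%:R 0 != 0 -> q B1 B2 v = 0) ->
  forall v : 'cV[R]_3, q B1 B2 v = 0.
Proof.
move=> H v; have [h|] := eqVneq (v 2%:R 0) 0; last exact: H.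
pose e : 'cV[R]_3 := delta_mx 2%:R 0.
have Ht (t : R) : t != 0 -> q B1 B2 (v + t *: e) = 0.
  move=> t0; apply: H; rewrite !mxE h eqxx /= add0r mulr1 //.
have h1 := Ht 1 (oner_neq0 _).
have h2 := Ht (-1) ltac:(by rewrite oppr_eq0 oner_eq0).
have h3 := Ht 2 ltac:(by rewrite pnatr_eq0).
have key : forall a1 a2 a3 a4 b1 b2 b3 b4 : R,
  (a1 + 1 * b1) * (a2 + 1 * b2) - (a3 + 1 * b3) * (a4 + 1 * b4) = 0 ->
  (a1 + -1 * b1) * (a2 + -1 * b2) - (a3 + -1 * b3) * (a4 + -1 * b4) = 0 ->
  (a1 + 2 * b1) * (a2 + 2 * b2) - (a3 + 2 * b3) * (a4 + 2 * b4) = 0 ->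
  a1 * a2 - a3 * a4 = 0.
  move=> a1 a2 a3 a4 b1 b2 b3 b4 k1 k2 k3.
  have -> : a1 * a2 - a3 * a4 =
    ((a1 + 1 * b1) * (a2 + 1 * b2) - (a3 + 1 * b3) * (a4 + 1 * b4))
    + ((a1 + -1 * b1) * (a2 + -1 * b2) - (a3 + -1 * b3) * (a4 + -1 * b4)) / 3%:R
    - ((a1 + 2 * b1) * (a2 + 2 * b2) - (a3 + 2 * b3) * (a4 + 2 * b4)) / 3%:R.
    by field.
  by rewrite k1 k2 k3 mul0r subr0 addr0.
move: h1 h2 h3; rewrite /q !mulmxDr -!scalemxAr !mxE.
exact: key.
Qed.


Lemma right_inv (B1 : 'M[R]_(2, 3)) : row_free B1 ->
  exists X : 'M[R]_(3, 2), B1 *m X = 1%:M.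
Proof.
move=> rf.
have rfT : row_full B1^T by rewrite /row_full mxrank_tr.
have := mulmxKpV (submx_full (1%:M : 'M[R]_2) rfT).
rewrite mul1mx => H.
exists (pinvmx B1^T)^T.
by rewrite -{1}[B1]trmxK -trmx_mul H trmx1.
Qed.

Lemma q_X (B1 B2 : 'M[R]_(2, 3)) (X : 'M[R]_(3, 2)) (v : 'cV[R]_3) (a : 'cV[R]_2) :
  B1 *m X = 1%:M ->
  q B1 B2 (v + X *m (a - B1 *m v)) =
  a 0 0 * ((B2 *m v) 1 0 + ((B2 *m X) *m (a - B1 *m v)) 1 0)
  - ((B2 *m v) 0 0 + ((B2 *m X) *m (a - B1 *m v)) 0 0) * a 1 0.
Proof.
move=> HX.
have e1 : B1 *m (v + X *m (a - B1 *m v)) = a.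
  by rewrite mulmxDr mulmxA HX mul1mx addrC subrK.
have e2 : B2 *m (v + X *m (a - B1 *m v)) = B2 *m v + B2 *m X *m (a - B1 *m v).
  by rewrite mulmxDr mulmxA.
by rewrite /q e1 e2 ![(B2 *m v + _) _ _]mxE.
Qed.

Lemma mv2 (M : 'M[R]_2) (a : 'cV[R]_2) i :
  (M *m a) i 0 = M i 0 * a 0 0 + M i 1 * a 1 0.
Proof.
rewrite mxE !big_ord_recr big_ord0 /=.
have e0 : widen_ord (leqnSn 1) ord_max = 0 :> 'I_2 by apply: val_inj.
have e1 : ord_max = 1 :> 'I_2 by apply: val_inj.
rewrite e0 e1; ring.
Qed.

Lemma final_alg (B1 B2 : 'M[R]_(2, 3)) : row_free B1 ->
  (forall v, q B1 B2 v = 0) -> exists c, B2 = c *: B1.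
Proof.
move=> rf Hq; have [X HX] := right_inv rf.
set M2 := B2 *m X.
have M2def : M2 = B2 *m X by [].
clearbody M2.
have Hqa (a : 'cV[R]_2) :
    a 0 0 * (M2 *m a) 1 0 - (M2 *m a) 0 0 * a 1 0 = 0.
  have := Hq (0 + X *m (a - B1 *m 0)).
  by rewrite M2def q_X // !mulmx0 !subr0 !mxE !add0r.
have c1 := Hqa (delta_mx 0 0).
have c2 := Hqa (delta_mx 1 0).
have c3 := Hqa (const_mx 1).
move: c1 c2 c3; rewrite !mv2 !mxE /= => c1 c2 c3.
have m10 : M2 1 0 = 0 by lra.
have m01 : M2 0 1 = 0 by lra.
have m11 : M2 1 1 = M2 0 0 by lra.
have key (v : 'cV[R]_3) i : (B2 *m v) i 0 = M2 0 0 * (B1 *m v) i 0.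
  have h0 := Hq (v + X *m (delta_mx 0 0 - B1 *m v)).
  have h1 := Hq (v + X *m (delta_mx 1 0 - B1 *m v)).
  rewrite !q_X // -M2def !mv2 m10 m01 m11 in h0 h1.
  move: h0 h1; set u := B1 *m v; set w := B2 *m v; rewrite !mxE /= => h0 h1.
  case: i => [[|[|i]] Hi] //.
    have -> : Ordinal Hi = 0 by apply: val_inj.
    nra.
  have -> : Ordinal Hi = 1 by apply: val_inj.
  nra.
exists (M2 0 0); apply/matrixP => i k.
have := key (delta_mx k 0) i.
by rewrite -!colE !mxE.
Qed.

End Alg.

Section Poly.
Variable R : realType.

Lemma polyfun_ext (f g : 'M[R]_3 -> R) : polyfun f -> (forall M, f M = g M) -> polyfun g.
Proof. by move=> hf e; have <- : f = g by apply/funext. Qed.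

Lemma polyfun_sum n (F : 'I_n -> 'M[R]_3 -> R) :
  (forall k, polyfun (F k)) -> polyfun (fun M => \sum_(k < n) F k M).
Proof.
elim: n F => [|n IH] F HF.
  by apply: (polyfun_ext (pf_const 0)) => M; rewrite big_ord0.
apply: (polyfun_ext (pf_add (IH (fun k => F (widen_ord (leqnSn n) k)) _) (HF ord_max))).
  by move=> k; apply: HF.
by move=> M /=; rewrite big_ord_recr.
Qed.

Lemma polyfun_pBM (B1 B2 : 'M[R]_(2, 3)) x :
  polyfun (fun M => pB (B1 *m M) (B2 *m M) x).
Proof.
have hr (B : 'M[R]_(2, 3)) j : polyfun (fun M => rowdot (B *m M) j x).
  apply: (polyfun_ext (polyfun_sum (F := fun k M => (\sum_(l < 3) B j l * M l k) * xtilde x k 0) _)).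
    move=> k; apply: pf_mul; last exact: pf_const.
    by apply: polyfun_sum => l; apply: pf_mul; [exact: pf_const | exact: pf_coord].
  by move=> M /=; rewrite /rowdot mxE; apply: eq_bigr => k _; rewrite [(B *m M) _ _]mxE.
apply: (polyfun_ext (pf_add (pf_mul (hr B1 0) (hr B2 1))
          (pf_mul (pf_const (-1)) (pf_mul (hr B2 0) (hr B1 1))))).
by move=> M; rewrite /pB; ring.
Qed.

Lemma pB_q (B1 B2 : 'M[R]_(2, 3)) M x :
  pB (B1 *m M) (B2 *m M) x = q B1 B2 (M *m xtilde x).
Proof. by rewrite /pB /q /rowdot !mulmxA. Qed.

End Poly.

Section Words.
Variable R : realType.
Variable I : finType.
Variable A : I -> 'M[R]_3.

Definition fw (M : 'M[R]_3) (i : I) := M *m A i.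

Lemma foldl_fw (g : 'M[R]_3) w : foldl fw g w = g *m foldl fw 1%:M w.
Proof.
elim: w g => [|i w IH] g /=; first by rewrite mulmx1.
by rewrite IH [in RHS]IH /fw mul1mx mulmxA.
Qed.

Lemma semigroup_word M : in_semigroup A M -> exists w, M = foldl fw 1%:M w.
Proof.
elim=> [i|M1 N1 _ [w1 ->] _ [w2 ->]].
  by exists [:: i]; rewrite /= /fw mul1mx.
by exists (w1 ++ w2); rewrite foldl_cat [in RHS]foldl_fw.
Qed.

End Words.

Unset Implicit Arguments.

Theorem lemma4p10 (R : realType) (I : finType) (A : I -> 'M[R]_3)
  (p : I -> R) (mu : probability (R * R)%type R)
  (B1 B2 : 'M[R]_(2, 3)) :
  (forall i, \det (A i) = 1) ->
  (forall i j k, 0 < A i j k) ->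
  zariski_dense_SL3 (in_semigroup A) ->
  (forall i, 0 < p i) -> \sum_i p i = 1 ->
  mu (~` [set x | 0 < x.1 /\ 0 < x.2]) = 0%E ->
  (exists K : set (R * R), compact K /\ mu (~` K) = 0%E) ->
  (forall E : set (R * R), measurable E ->
     mu E = (\sum_i (p i)%:E * mu (phiA (A i) @^-1` E))%E) ->
  in_Bset B1 ->
  (forall c : R, B2 != c *: B1) ->
  (0 < mu [set x | pB B1 B2 x != 0%R])%E.
Proof.
move=> Hdet Hpos Hzar Hp Hsum HQ _ Hstat HB1 HB2.
set Q := [set x : R * R | 0 < x.1 /\ 0 < x.2].
pose Z (g : 'M[R]_3) := [set x | pB (B1 *m g) (B2 *m g) x != 0].
have mZ g : measurable (Z g) by apply: meas_neq0; exact: meas_pB.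
have mQ : measurable Q.
  have -> : Q = (setT `&` fst @^-1` `]0, +oo[%classic) `&` (setT `&` snd @^-1` `]0, +oo[%classic).
    apply/seteqP; split => x /=; rewrite /Q /= !in_itv /= !andbT; [by case | by case=> [[_ h1] [_ h2]]].
  apply: measurableI.
    exact: measurable_fst measurableT _ (measurable_itv _).
  exact: measurable_snd measurableT _ (measurable_itv _).
have nQc : mu.-negligible (~` Q) by apply/negligibleP => //; exact: measurableC.
have step g : mu.-negligible (Z g) -> forall i, mu.-negligible (Z (g *m A i)).
  move=> Hg i.
  have mu0 : mu (Z g) = 0%E by apply/negligibleP.
  have := Hstat (Z g) (mZ g); rewrite mu0 => /esym/eqP.
  rewrite seq_psume_eq0; last first.
    by move=> j _; rewrite mule_ge0 // lee_fin ltW.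
  move=> /allP /(_ i (mem_index_enum i)) /=.
  rewrite mule_eq0 eqe (gt_eqF (Hp i)) /= => /eqP Hi.
  have nP : mu.-negligible (phiA (A i) @^-1` Z g).
    by apply/negligibleP => //; exact: meas_preimage.
  apply: (negligibleS _ (negligibleU nP nQc)) => x /= Hx.
  have [Qx|] := EM (Q x); last by right.
  left.
  have r2 : 0 < rowdot (A i) 2%:R x.
    rewrite rowdot_expand; case: Qx => h1 h2.
    by rewrite !addr_gt0 // mulr_gt0.
  move: Hx; rewrite /Z /= !mulmxA -(pB_phi _ _ (lt0r_neq0 r2)).
  by apply: contra => /eqP ->; rewrite mul0r.
have words w : forall g, mu.-negligible (Z g) -> mu.-negligible (Z (foldl (fw A) g w)).
  elim: w => [|i w IH] g Hg //=.
  by apply: IH; apply: step.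
rewrite lt_neqAle measure_ge0 andbT eq_sym; apply/eqP => H0.
have Z1 : mu.-negligible (Z 1%:M).
  apply/negligibleP => //.
  by rewrite /Z !mulmx1.
pose F n : set (R * R) := if (unpickle n : option (seq I)) is Some w
  then Z (foldl (fw A) 1%:M w) else set0.
have nF : mu.-negligible (\bigcup_n F n).
  apply: negligible_bigcup => n; rewrite /F.
  case: unpickle => [w|]; [exact: words | exact: negligible_set0].
have [x [Qx nx]] : exists x, Q x /\ ~ (\bigcup_n F n) x.
  have [//|N] := EM (exists x, Q x /\ ~ (\bigcup_n F n) x).
  exfalso.
  have : mu.-negligible setT.
    apply: (negligibleS _ (negligibleU nF nQc)) => y _.
    have [Qy|] := EM (Q y); last by right.
    left; have [//|nU] := EM ((\bigcup_n F n) y).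
    by exfalso; apply: N; exists y.
  move/negligibleP => /(_ measurableT).
  move=> h0; have h1 := probability_setT mu.
  have : (0%E = 1%E :> \bar R) := etrans (esym h0) h1.
  by move/eqP; rewrite eqe eq_sym oner_eq0.
have Hw w : pB (B1 *m foldl (fw A) 1%:M w) (B2 *m foldl (fw A) 1%:M w) x = 0.
  apply/eqP/negPn/negP => Hne; apply: nx; exists (pickle w) => //.
  by rewrite /F pickleK.
have Hsg M : \det M = 1 -> pB (B1 *m M) (B2 *m M) x = 0.
  apply: (Hzar _ (polyfun_pBM B1 B2 x)).
  by move=> N /semigroup_word [w ->]; exact: Hw.
have Hq : forall v, q B1 B2 v = 0.
  apply: q_ext => v hv.
  have := Hsg _ (mkM_det x.1 x.2 hv).
  rewrite pB_q.
  have -> : xtilde x = \col_(i < 3) [:: x.1; x.2; 1] `_ i by [].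
  by rewrite mkM_mul.
case: HB1 => _ [_ rf].
have [c Hc] := final_alg rf Hq.
by move: (HB2 c); rewrite Hc eqxx.
Qed.
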